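(* Let $\mathcal{R}$ be a set of rules on a finite set $Q$. Then $\mathcal{K}(\mathcal{R})=\mathcal{A}(\mathcal{R})$ if and only if for every pair of nontrivial implicates $(A,q)$, $(A',q')$ of $\mathcal{K}(\mathcal{R})$, both $((A\cup A')\setminus\{q,q'\},q)$ and $((A\cup A')\setminus\{q,q'\},q')$ are implicates of $\mathcal{K}(\mathcal{R})$.
   Context: A rule on $Q$ is a pair $(A,q)$ with $A\subseteq Q$, $q\in Q$; it is nontrivial if $q\notin A$. It accepts $Y\subseteq Q$ if $q\in Y$ implies $Y\cap A\neq\emptyset$. $\mathcal{K}(\mathcal{R})$ is the family of subsets accepted by all rules of $\mathcal{R}$, and $\mathcal{A}(\mathcal{R})$ is the family of $K\in\mathcal{K}(\mathcal{R})$ for which there is a sequence $\emptyset=Y_0\subseteq\dots\subseteq Y_k=K$ of members of $\mathcal{K}(\mathcal{R})$ with $|Y_{i+1}\setminus Y_i|=1$. A rule is an implicate of a family $\mathcal{F}$ if it accepts every member of $\mathcal{F}$. *)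

(* Defs.v *)
From mathcomp Require Import all_boot.
Set Implicit Arguments. Unset Strict Implicit. Unset Printing Implicit Defensive.

Section Rules.
Variable Q : finType.

Definition rule := ({set Q} * Q)%type.

Definition nontrivial (r : rule) : bool := r.2 \notin r.1.

Definition accepts (r : rule) (Y : {set Q}) : bool :=
  (r.2 \in Y) ==> (Y :&: r.1 != set0).

Definition Kfam (R : {set rule}) : {set {set Q}} :=
  [set Y | [forall r in R, accepts r Y]].

Definition accessible_chain (R : {set rule}) (s : seq {set Q}) : Prop :=
  [/\ head set0 s = set0,
      all (fun Y => Y \in Kfam R) s &
      forall i, i.+1 < size s ->
        nth set0 s i \subset nth set0 s i.+1 /\
        #|nth set0 s i.+1 :\: nth set0 s i| = 1].

Definition inA (R : {set rule}) (K : {set Q}) : Prop :=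
  K \in Kfam R /\
  exists s, [/\ accessible_chain R s, s <> [::] & last set0 s = K].

Definition implicate (F : {set {set Q}}) (r : rule) : Prop :=
  forall Y, Y \in F -> accepts r Y.

End Rules.

(* Main.v *)
Require Import Defs.
From mathcomp Require Import all_boot.
Set Implicit Arguments. Unset Strict Implicit.

Lemma two_new (Q : finType) (Y0 Y1 : {set Q}) a b :
  #|Y1 :\: Y0| = 1 -> a \in Y1 -> b \in Y1 -> a \notin Y0 -> b \notin Y0 -> a = b.
Proof.
move=> hc ha hb na nb; apply/eqP; apply: contraT => nab.
have : [set a; b] \subset Y1 :\: Y0.
  by apply/subsetP => x; rewrite !inE => /orP[]/eqP->; rewrite ?ha ?hb ?na ?nb.
by move/subset_leq_card; rewrite cards2 nab hc.
Qed.

Lemma fwd (Q : finType) (R : {set rule Q}) (A A' : {set Q}) (q q' : Q) :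
  nontrivial (A, q) -> nontrivial (A', q') ->
  implicate (Kfam R) (A, q) -> implicate (Kfam R) (A', q') ->
  forall Y, inA R Y -> (q \in Y) || (q' \in Y) ->
  Y :&: ((A :|: A') :\: [set q; q']) != set0.
Proof.
rewrite /nontrivial /= => nq nq' iA iA' Y [YK [s [[h0 hall hst] sne <-]]].
set D := (A :|: A') :\: [set q; q'].
suff H : forall i, i < size s -> (q \in nth set0 s i) || (q' \in nth set0 s i) ->
   nth set0 s i :&: D != set0.
  by rewrite -nth_last; apply: H; case: s sne {h0 hall hst}.
elim=> [|i IH] lt.
  by rewrite nth0 h0 !inE.
have [sub c1] := hst i lt.
have lti : i < size s by apply: ltnW.
have Kin : nth set0 s i.+1 \in Kfam R by apply: (allP hall); apply: mem_nth.
case old: ((q \in nth set0 s i) || (q' \in nth set0 s i)).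
  move=> _; have := IH lti old; apply: contraNN => /eqP e.
  apply/eqP/setP => x; rewrite [x \in set0]inE.
  apply: negbTE; rewrite [x \in _ :&: D]inE; apply/andP => -[xi xD].
  have : x \in nth set0 s i.+1 :&: D by rewrite [x \in _ :&: D]inE xD (subsetP sub).
  by rewrite e inE.
move/negbT: old; rewrite negb_or => /andP[nqo nq'o].
have gen : forall (B : {set Q}) p, p \notin B -> implicate (Kfam R) (B, p) ->
   B \subset A :|: A' -> p \in [set q; q'] ->
   p \in nth set0 s i.+1 -> nth set0 s i.+1 :&: D != set0.
  move=> B p pB iB sB pqq pin.
  have := iB _ Kin; rewrite /accepts /= pin /= => /set0Pn[y].
  rewrite inE => /andP[yY yB].
  apply/set0Pn; exists y; rewrite inE yY /= /D inE (subsetP sB) // andbT !inE.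
  have yp : y != p by apply: contraNneq pB => <-.
  rewrite negb_or; apply/andP; split; apply/negP => /eqP ey; subst y;
  move: pqq pin; rewrite !inE => /orP[]/eqP ep pin; subst p.
  + by rewrite eqxx in yp.
  + by move/eqP: yp; apply; apply: (two_new c1 yY pin).
  + by move/eqP: yp; apply; apply: (two_new c1 yY pin).
  + by rewrite eqxx in yp.
case/orP=> hin.
  by apply: (gen A q) => //; [apply: subsetUl | rewrite !inE eqxx].
by apply: (gen A' q') => //; [apply: subsetUr | rewrite !inE eqxx orbT].
Qed.

Definition Hcond (Q : finType) (R : {set rule Q}) :=
  forall (A A' : {set Q}) (q q' : Q),
     nontrivial (A, q) -> nontrivial (A', q') ->
     implicate (Kfam R) (A, q) -> implicate (Kfam R) (A', q') ->
     implicate (Kfam R) ((A :|: A') :\: [set q; q'], q) /\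
     implicate (Kfam R) ((A :|: A') :\: [set q; q'], q').

Lemma R_impl (Q : finType) (R : {set rule Q}) r : r \in R -> implicate (Kfam R) r.
Proof. by move=> rR Y; rewrite inE => /forall_inP; apply. Qed.

Lemma removable (Q : finType) (R : {set rule Q}) (H : Hcond R) (K : {set Q}) :
  K \in Kfam R -> K != set0 -> exists2 q, q \in K & K :\ q \in Kfam R.
Proof.
move=> KK Kn0.
case: (boolP [exists q in K, K :\ q \in Kfam R]) => [/exists_inP[q]|]; first by exists q.
move=> /exists_inPn nrem.
have : forall q, exists r : rule Q, (q \in K) -> r \in R /\ ~~ accepts r (K :\ q).
  move=> q; case: (boolP (q \in K)) => qK; last by exists (set0, q).
  have := nrem q qK; rewrite inE => /forallPn[r]; rewrite negb_imply => /andP[rR na].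
  by exists r.
case/fin_all_exists => g gP.
pose f x := (g x).2. pose B x := (g x).1.
have fK : forall x, x \in K -> f x \in K /\ f x != x.
  move=> x xK; have [_] := gP x xK; rewrite /accepts negb_imply => /andP[h _].
  by move: h; rewrite !inE => /andP[-> ->].
have BK : forall x y, x \in K -> y \in B x -> y \in K -> y = x.
  move=> x y xK yB yK; have [_] := gP x xK; rewrite /accepts negb_imply => /andP[_].
  rewrite negbK => /eqP/setP/(_ y); rewrite !inE yK yB andbT.
  by case: (y == x) /eqP.
have Bi : forall x, x \in K -> implicate (Kfam R) (B x, f x).
  by move=> x xK; have [rR _] := gP x xK; apply: R_impl; rewrite /B /f -surjective_pairing.
have fB : forall x, x \in K -> f x \notin B x.
  move=> x xK; apply/negP => h; have [h1 h2] := fK x xK.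
  by move: h2; rewrite (BK x (f x) xK h h1) eqxx.
have itK : forall q n, q \in K -> iter n f q \in K.
  by move=> q n qK; elim: n => [|n IH] //=; case: (fK _ IH).
have P : forall q k, q \in K -> exists C,
   [/\ implicate (Kfam R) (C, iter k.+1 f q), iter k.+1 f q \notin C &
       forall y, y \in C -> y \in K -> y = q].
  move=> q k qK; elim: k => [|k [C [iC tC CK]]].
    by exists (B q); split => //=; [apply: Bi | apply: fB | move=> y; apply: BK].
  set t := iter k.+1 f q.
  have tK : t \in K by apply: itK.
  have [_ iC'] := H C (B t) t (f t) tC (fB t tK) iC (Bi t tK).
  exists ((C :|: B t) :\: [set t; f t]); split => //.
    by rewrite !inE eqxx orbT.
  move=> y; rewrite !inE negb_or => /andP[/andP[yt _] /orP[yC|yB]] yK.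
    by apply: CK.
  by move: yt; rewrite (BK t y tK yB yK) eqxx.
have ncyc : forall q k, q \in K -> iter k.+1 f q != q.
  move=> q k qK; have [C [iC tC CK]] := P q k qK.
  have := iC K KK; move/implyP/(_ (itK q k.+1 qK))/set0Pn => -[y].
  rewrite inE => /andP[yK yC]; have yq := CK y yC yK; subst y.
  by apply/negP => /eqP e; move: tC; rewrite e yC.
case/set0Pn: Kn0 => q0 q0K.
pose h (i : 'I_(#|Q|.+1)) := iter i f q0.
case: (boolP [exists i, exists j, (i != j) && (h i == h j)]); last first.
  move=> /existsPn hn.
  have hinj : injective h.
    move=> i j /eqP e; apply/eqP; apply: contraTT (hn i) => ij.
    by rewrite negbK; apply/existsP; exists j; rewrite ij e.
  by have := leq_card _ hinj; rewrite card_ord ltnn.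
move=> /existsP[i /existsP[j /andP[ij /eqP e]]].
have gen : forall a b : nat, a < b -> iter a f q0 = iter b f q0 -> False.
  move=> a b ab eab.
  have := ncyc (iter a f q0) (b - a).-1 (itK _ _ q0K).
  rewrite prednK ?subn_gt0 // -iterD subnK ?(ltnW ab) // eab.
  by rewrite eqxx.
case: (ltngtP i j) => [lt|lt|eq]; first by case: (gen _ _ lt e).
  by case: (gen _ _ lt (esym e)).
by move: ij; rewrite (val_inj eq) eqxx.
Qed.

Lemma bwd (Q : finType) (R : {set rule Q}) (H : Hcond R) (K : {set Q}) :
  K \in Kfam R -> inA R K.
Proof.
move: {2}#|K| (leqnn #|K|) => n; elim: n K => [|n IH] K.
  rewrite leqn0 cards_eq0 => /eqP -> _; split.
    by rewrite inE; apply/forall_inP => r _; rewrite /accepts inE.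
  have s0 : set0 \in Kfam R by rewrite inE; apply/forall_inP => r _; rewrite /accepts inE.
  by exists [:: set0]; split => //; split => //=; rewrite ?s0 // => -[].
move=> Kn KK; case: (eqVneq K set0) => [eK|Kn0].
  move: KK; rewrite eK.
  by move=> KK0; apply: IH => //; rewrite cards0.
have [q qK Kq] := removable H KK Kn0.
have cK : #|K :\ q| <= n by move: Kn; rewrite (cardsD1 q K) qK add1n ltnS.
have [_ [s [[h0 hall hst] sne ls]]] := IH (K :\ q) cK Kq.
  split => //; exists (rcons s K); split; last by rewrite last_rcons.
  - split.
    + by case: s sne h0 {hall hst ls}.
    + by rewrite all_rcons KK hall.
    + move=> i; rewrite size_rcons ltnS => lt.
      have lti : i < size s by [].
      rewrite !nth_rcons lti.
      case: (ltnP i.+1 (size s)) => [lt2|ge].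
      * by apply: hst.
      have e : i.+1 = size s by apply/eqP; rewrite eqn_leq lt ge.
      rewrite -e ?ltnn ?eqxx.
      have -> : nth set0 s i = K :\ q by rewrite -ls -nth_last -e.
      rewrite subD1set; split => //.
      have -> : K :\: (K :\ q) = [set q].
        by apply/setP => x; rewrite !inE; case: (x =P q) => [->|] /=; rewrite ?qK ?eqxx //=; case: (x \in K).
      by rewrite cards1.
  - by case: s {sne h0 hall hst ls}.
Qed.

Theorem lemma3p10 (Q : finType) (R : {set rule Q}) :
  (forall K : {set Q}, K \in Kfam R <-> inA R K) <->
  (forall (A A' : {set Q}) (q q' : Q),
     nontrivial (A, q) -> nontrivial (A', q') ->
     implicate (Kfam R) (A, q) -> implicate (Kfam R) (A', q') ->
     implicate (Kfam R) ((A :|: A') :\: [set q; q'], q) /\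
     implicate (Kfam R) ((A :|: A') :\: [set q; q'], q')).
Proof.
split.
  move=> HK A A' q q' n1 n2 i1 i2; split => Y YK; rewrite /accepts /=;
  apply/implyP => hq; apply: (fwd n1 n2 i1 i2 (proj1 (HK Y) YK));
  by rewrite hq ?orbT.
move=> H K; split; first exact: bwd.
by case.
Qed.
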